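(* Let $(A,\rhd,\lhd,\succ,\prec)$ be a pre-dual pre-Poisson algebra. (a) With $x\circ y=x\rhd y+x\lhd y$ and $[x,y]=x\succ y+x\prec y$, $(A,\circ,[\cdot,\cdot])$ is a dual pre-Poisson algebra, and $(A;L_\rhd,R_\lhd,L_\succ,R_\prec)$ is a representation of $(A,\circ,[\cdot,\cdot])$. (b) Suppose moreover that $x\lhd y=y\rhd x$ and $x\prec y=-y\succ x$ for all $x,y\in A$. Then with $x\diamond y=x\succ y$ and $x\odot y=x\rhd y$, $(A,\diamond,\odot)$ is a pre-Poisson algebra, and $(A,\bullet,\{\cdot,\cdot\})$ with $x\bullet y=x\odot y+y\odot x$, $\{x,y\}=x\diamond y-y\diamond x$ is a Poisson algebra.
   Context: Field $\mathbb{F}$ of characteristic $0$. $L_\diamond(x)y=x\diamond y$, $R_\diamond(x)y=y\diamond x$. A pre-dual pre-Poisson algebra: bilinear $\rhd,\lhd,\succ,\prec$ with, for all $x,y,z$: $x\lhd(y\lhd z+y\rhd z)=(x\lhd y)\lhd z=(y\rhd x)\lhd z=y\rhd(x\lhd z)$; $x\rhd(y\rhd z)=(x\lhd y+x\rhd y)\rhd z=(y\lhd x+y\rhd x)\rhd z$; $(x\prec y+x\succ y)\succ z=x\succ(y\succ z)-y\succ(x\succ z)$; $(x\succ y)\prec z=-(y\prec x)\prec z$; $x\prec(y\prec z+y\succ z)=(x\prec y)\prec z+y\succ(x\prec z)$; $x\prec(y\rhd z+y\lhd z)=(x\prec y)\lhd z+y\rhd(x\prec z)$; $x\succ(y\lhd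 z)=(x\succ y)\lhd z+y\lhd(x\succ z+x\prec z)$; $x\succ(y\rhd z)=(x\succ y+x\prec y)\rhd z+y\rhd(x\succ z)$; $(x\lhd y)\prec z=x\lhd(y\succ z+y\prec z)+y\rhd(x\prec z)$; $(x\rhd y+x\lhd y)\succ z=x\rhd(y\succ z)+y\rhd(x\succ z)$; $(x\rhd y-y\lhd x)\prec z=0$; $(x\succ y+y\prec x)\lhd z=0$; $(x\succ y+x\prec y+y\succ x+y\prec x)\rhd z=0$. A dual pre-Poisson algebra: $x\circ(y\circ z)=(x\circ y)\circ z=(y\circ x)\circ z$; $[x,[y,z]]=[[x,y],z]+[y,[x,z]]$; $[x,y\circ z]=[x,y]\circ z+y\circ[x,z]$; $[x\circ y,z]=x\circ[y,z]+y\circ[x,z]$; $[x,y]\circ z=-[y,x]\circ z$. A representation $(V;l_\circ,r_\circ,l_{[\cdot,\cdot]},r_{[\cdot,\cdot]})$ of it: linear maps $A\to\mathrm{End}(V)$ with $r_\circ(x)r_\circ(y)=r_\circ(y\circ x)=l_\circ(y)r_\circ(x)=r_\circ(x)l_\circ(y)$; $l_\circ(x\circ y)=l_\circ(x)l_\circ(y)=l_\circ(y)l_\circ(x)$; $l_{[\cdot,\cdot]}([x,y])=l_{[\cdot,\cdot]}(x)l_{[\cdot,\cdot]}(y)-l_{[\cdot,\cdot]}(y)l_{[\cdot,\cdot]}(x)$; $r_{[\cdot,\cdot]}([x,y])=r_{[\cdot,\cdot]}(y)r_{[\cdot,\cdot]}(x)+l_{[\cdot,\cdot]}(x)r_{[\cdot,\cdot]}(y)$;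 $r_{[\cdot,\cdot]}(x)r_{[\cdot,\cdot]}(y)=-r_{[\cdot,\cdot]}(x)l_{[\cdot,\cdot]}(y)$; $r_{[\cdot,\cdot]}(x\circ y)=r_\circ(y)r_{[\cdot,\cdot]}(x)+l_\circ(x)r_{[\cdot,\cdot]}(y)$; $l_{[\cdot,\cdot]}(x)r_\circ(y)=r_\circ(y)l_{[\cdot,\cdot]}(x)+r_\circ([x,y])$; $l_{[\cdot,\cdot]}(x)l_\circ(y)=l_\circ([x,y])+l_\circ(y)l_{[\cdot,\cdot]}(x)$; $r_{[\cdot,\cdot]}(x)r_\circ(y)=r_\circ([y,x])+l_\circ(y)r_{[\cdot,\cdot]}(x)$; $l_{[\cdot,\cdot]}(x\circ y)=l_\circ(x)l_{[\cdot,\cdot]}(y)+l_\circ(y)l_{[\cdot,\cdot]}(x)$; $r_{[\cdot,\cdot]}(x)(l_\circ-r_\circ)(y)=0$; $r_\circ(x)(l_{[\cdot,\cdot]}+r_{[\cdot,\cdot]})(y)=0$; $l_\circ([x,y]+[y,x])=0$. A pre-Poisson algebra $(A,\diamond,\odot)$: $x\diamond(y\diamond z)-(x\diamond y)\diamond z=y\diamond(x\diamond z)-(y\diamond x)\diamond z$; $x\odot(y\odot z)=(x\odot y+y\odot x)\odot z$; $(x\diamond y-y\diamond x)\odot z=x\diamond(y\odot z)-y\odot(x\diamond z)$; $(x\odot y+y\odot x)\diamond z=x\odot(y\diamond z)+y\odot(x\diamond z)$. A Poisson algebra: commutative associative $\bullet$, Lie bracket $\{\cdot,\cdot\}$, $\{x,y\bullet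 z\}=\{x,y\}\bullet z+y\bullet\{x,z\}$. *)

(* Defs.v *)
From HB Require Import structures.
From mathcomp Require Import all_boot all_order all_algebra.
Set Implicit Arguments. Unset Strict Implicit. Unset Printing Implicit Defensive.
Import GRing.Theory.
Local Open Scope ring_scope.

Section Defs.
Variables (F : fieldType) (A : lmodType F).

Definition bilinear_op (op : A -> A -> A) : Prop :=
  (forall (a : F) x y z, op (a *: x + y) z = a *: op x z + op y z) /\
  (forall (a : F) x y z, op z (a *: x + y) = a *: op z x + op z y).

Definition pre_dual_pre_Poisson (rhd lhd succ prec : A -> A -> A) : Prop :=
  ((bilinear_op rhd) /\ (bilinear_op lhd) /\ (bilinear_op succ) /\ (bilinear_op prec) /\ (forall x y z, ((lhd x (lhd y z + rhd y z) = lhd (lhd x y) z) /\ (lhd (lhd x y) z = lhd (rhd y x) z) /\ (lhd (rhd y x) z = rhd y (lhd x z)) /\ (rhd x (rhd y z) = rhd (lhd x y + rhd x y) z) /\ (rhd (lhd x y + rhd x y) z = rhd (lhd y x + rhd y x) z) /\ (succ (prec x y + succ x y) z = succ x (succ y z) - succ y (succ x z)) /\ (prec (succ x y) z = - prec (prec y x) z) /\ (prec x (prec y z + succ y z) = prec (prec x y) z + succ y (prec x z)) /\ (prec x (rhd y z + lhd y z) = lhd (prec x y) z + rhd y (prec x z)) /\ (succ x (lhd y z) = lhd (succ x y) z + lhd y (succ x z + prec x z)) /\ (succ x (rhd y z) = rhd (succ x y + prec x y) z + rhd y (succ x z)) /\ (prec (lhd x y) z = lhd x (succ y z + prec y z)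 + rhd y (prec x z)) /\ (succ (rhd x y + lhd x y) z = rhd x (succ y z) + rhd y (succ x z)) /\ (prec (rhd x y - lhd y x) z = 0) /\ (lhd (succ x y + prec y x) z = 0) /\ (rhd (succ x y + prec x y + succ y x + prec y x) z = 0)))).

Definition dual_pre_Poisson (circ br : A -> A -> A) : Prop :=
  ((bilinear_op circ) /\ (bilinear_op br) /\ (forall x y z, ((circ x (circ y z) = circ (circ x y) z) /\ (circ (circ x y) z = circ (circ y x) z) /\ (br x (br y z) = br (br x y) z + br y (br x z)) /\ (br x (circ y z) = circ (br x y) z + circ y (br x z)) /\ (br (circ x y) z = circ x (br y z) + circ y (br x z)) /\ (circ (br x y) z = - circ (br y x) z)))).

(* a linear map A -> End(V), given as l : A -> V -> V *)
Definition lin_to_end (V : lmodType F) (l : A -> V -> V) : Prop :=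
  (forall (a : F) x y v, l (a *: x + y) v = a *: l x v + l y v) /\
  (forall x (a : F) u v, l x (a *: u + v) = a *: l x u + l x v).

(* representation (V; lc, rc, lb, rb) of the dual pre-Poisson algebra (A, circ, br);
   products of endomorphisms are compositions, equalities are pointwise on V *)
Definition dpp_representation (circ br : A -> A -> A) (V : lmodType F)
    (lc rc lb rb : A -> V -> V) : Prop :=
  ((lin_to_end lc) /\ (lin_to_end rc) /\ (lin_to_end lb) /\ (lin_to_end rb) /\ (forall x y (v : V), ((rc x (rc y v) = rc (circ y x) v) /\ (rc (circ y x) v = lc y (rc x v)) /\ (lc y (rc x v) = rc x (lc y v)) /\ (lc (circ x y) v = lc x (lc y v)) /\ (lc x (lc y v) = lc y (lc x v)) /\ (lb (br x y) v = lb x (lb y v) - lb y (lb x v)) /\ (rb (br x y) v = rb y (rb x v) + lb x (rb y v)) /\ (rb x (rb y v) = - rb x (lb y v)) /\ (rb (circ x y) v = rc y (rb x v) + lc x (rb y v)) /\ (lb x (rc y v) = rc y (lb x v) + rc (br x y) v) /\ (lb x (lc y v) = lc (br x y) v + lc y (lb x v)) /\ (rb x (rc y v) = rc (br y x) v + lc y (rb x v)) /\ (lb (circ x y) v = lc x (lb y v) + lc y (lb x v)) /\ (rb x (lc y v - rc y v) = 0) /\ (rc x (lb y v + rb y v) = 0) /\ (lc (br x y + br y x) v = 0)))).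

Definition pre_Poisson (dia odot : A -> A -> A) : Prop :=
  ((bilinear_op dia) /\ (bilinear_op odot) /\ (forall x y z, ((dia x (dia y z) - dia (dia x y) z = dia y (dia x z) - dia (dia y x) z) /\ (odot x (odot y z) = odot (odot x y + odot y x) z) /\ (odot (dia x y - dia y x) z = dia x (odot y z) - odot y (dia x z)) /\ (dia (odot x y + odot y x) z = odot x (dia y z) + odot y (dia x z))))).

Definition Poisson (bullet pb : A -> A -> A) : Prop :=
  ((bilinear_op bullet) /\ (bilinear_op pb) /\ (forall x y z, ((bullet x y = bullet y x) /\ (bullet (bullet x y) z = bullet x (bullet y z)) /\ (pb x x = 0) /\ (pb x (pb y z) + pb y (pb z x) + pb z (pb x y) = 0) /\ (pb x (bullet y z) = bullet (pb x y) z + bullet y (pb x z))))).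

End Defs.

(* Main.v *)
Require Import Defs.
From HB Require Import structures.
From mathcomp Require Import all_boot all_order all_algebra.
Import GRing.Theory.
Local Open Scope ring_scope.



Ltac find_front a R :=
  lazymatch R with
  | a + _ => uconstr:(erefl R)
  | ?b + a => uconstr:(addrC b a)
  | ?b + ?r => let p := find_front a r in
      uconstr:(eq_trans (congr1 (fun u => b + u) p) (addrCA b a _))
  end.

Ltac find_front_n a R :=
  lazymatch R with
  | @Algebra.add _ (@Algebra.opp _ a) _ => uconstr:(erefl R)
  | @Algebra.add _ ?b (@Algebra.opp _ a) => uconstr:(addrC b _)
  | @Algebra.add _ ?b ?r => let p := find_front_n a r in
      uconstr:(eq_trans (congr1 (fun u => b + u) p) (addrCA b _ _))
  end.

Ltac find_opp a R :=
  lazymatch a with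
  | @Algebra.opp _ ?t => find_front t R
  | _ => find_front_n a R
  end.

Ltac cancel_step :=
  lazymatch goal with
  | |- ?a + ?l = 0 => let p := find_opp a l in
        let h := fresh in have h : l = _ := p; try rewrite [in LHS]h; clear h;
        first [rewrite addKr | rewrite addNKr]
  end.

Lemma ac_lem (V : zmodType) (x y : V) : x - y = 0 -> x = y.
Proof. by move/eqP; rewrite subr_eq0 => /eqP. Qed.
Lemma use_lem (V : zmodType) (S a b : V) : a = b -> S - (a - b) = 0 -> S = 0.
Proof. by move=> ->; rewrite subrr subr0. Qed.
Arguments use_lem {V S a b}.
Lemma pad_lem (V : zmodType) (S : V) : S + 0 = 0 -> S = 0.
Proof. by rewrite addr0. Qed.

Ltac ac_finish :=
  apply: pad_lem; rewrite ?opprD ?opprK -?addrA ?oppr0 ?add0r;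
  repeat cancel_step; reflexivity.

Set Implicit Arguments.
Section BL.
Variables (F : fieldType) (A : lmodType F) (op : A -> A -> A).
Hypothesis Hop : bilinear_op op.
Lemma blDl x y z : op (x + y) z = op x z + op y z.
Proof. by have := Hop.1 1 x y z; rewrite !scale1r. Qed.
Lemma blDr x y z : op z (x + y) = op z x + op z y.
Proof. by have := Hop.2 1 x y z; rewrite !scale1r. Qed.
Lemma bl0l z : op 0 z = 0.
Proof.
have := blDl 0 0 z; rewrite addr0 => e.
by have := congr1 (fun u => u - op 0 z) e; rewrite subrr addrK => <-.
Qed.
Lemma bl0r z : op z 0 = 0.
Proof.
have := blDr 0 0 z; rewrite addr0 => e.
by have := congr1 (fun u => u - op z 0) e; rewrite subrr addrK => <-.
Qed.
Lemma blNl x z : op (- x) z = - op x z.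
Proof.
have := blDl (-x) x z; rewrite addNr bl0l => /esym/eqP.
by rewrite addr_eq0 => /eqP.
Qed.
Lemma blNr x z : op z (- x) = - op z x.
Proof.
have := blDr (-x) x z; rewrite addNr bl0r => /esym/eqP.
by rewrite addr_eq0 => /eqP.
Qed.
End BL.

Ltac ex1 H := rewrite ?(blDl H) ?(blDr H) ?(blNl H) ?(blNr H) ?(bl0l H) ?(bl0r H).
Ltac U E := apply: (use_lem E).
Theorem proposition3p26 (F : fieldType) (charF0 : [pchar F] =i pred0)
    (A : lmodType F) (rhd lhd succ prec : A -> A -> A) :
  pre_dual_pre_Poisson rhd lhd succ prec ->
  (dual_pre_Poisson (fun x y => rhd x y + lhd x y) (fun x y => succ x y + prec x y)
   /\ dpp_representation (fun x y => rhd x y + lhd x y)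
        (fun x y => succ x y + prec x y)
        (fun x v => rhd x v) (fun x v => lhd v x)
        (fun x v => succ x v) (fun x v => prec v x))
  /\ ((forall x y, lhd x y = rhd y x) -> (forall x y, prec x y = - succ y x) ->
      pre_Poisson succ rhd
      /\ Poisson (fun x y => rhd x y + rhd y x) (fun x y => succ x y - succ y x)).
Proof.
move=> [Hr [Hl [Hs [Hp H]]]].
have a1 := fun x y z => (H x y z).1.
have a2 := fun x y z => (H x y z).2.1.
have a3 := fun x y z => (H x y z).2.2.1.
have a4 := fun x y z => (H x y z).2.2.2.1.
have a5 := fun x y z => (H x y z).2.2.2.2.1.
have a6 := fun x y z => (H x y z).2.2.2.2.2.1.
have a7 := fun x y z => (H x y z).2.2.2.2.2.2.1.
have a8 := fun x y z => (H x y z).2.2.2.2.2.2.2.1.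
have a9 := fun x y z => (H x y z).2.2.2.2.2.2.2.2.1.
have a10 := fun x y z => (H x y z).2.2.2.2.2.2.2.2.2.1.
have a11 := fun x y z => (H x y z).2.2.2.2.2.2.2.2.2.2.1.
have a12 := fun x y z => (H x y z).2.2.2.2.2.2.2.2.2.2.2.1.
have a13 := fun x y z => (H x y z).2.2.2.2.2.2.2.2.2.2.2.2.1.
have a14 := fun x y z => (H x y z).2.2.2.2.2.2.2.2.2.2.2.2.2.1.
have a15 := fun x y z => (H x y z).2.2.2.2.2.2.2.2.2.2.2.2.2.2.1.
have a16 := fun x y z => (H x y z).2.2.2.2.2.2.2.2.2.2.2.2.2.2.2.
clear H.
Ltac exall Hr Hl Hs Hp := ex1 Hr; ex1 Hl; ex1 Hs; ex1 Hp; ex1 Hr; ex1 Hl; ex1 Hs; ex1 Hp.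
Ltac fin Hr Hl Hs Hp := exall Hr Hl Hs Hp; ac_finish.
Ltac lin Hr Hl Hs Hp := rewrite ?Hr.1 ?Hr.2 ?Hl.1 ?Hl.2 ?Hs.1 ?Hs.2 ?Hp.1 ?Hp.2 ?scalerDr ?scalerBr ?scalerN; apply: ac_lem; ac_finish.
split; first split.
- split; first by split; move=> a x y z /=; lin Hr Hl Hs Hp.
  split; first by split; move=> a x y z /=; lin Hr Hl Hs Hp.
  move=> x y z; split; [|split; [|split; [|split; [|split]]]]; apply: ac_lem.
  + U (a4 x y z); U (esym (a3 y x z)); U (a1 x y z); fin Hr Hl Hs Hp.
  + U (a5 x y z); U (a2 x y z); U (esym (a2 y x z)); fin Hr Hl Hs Hp.
  + U (esym (a6 x y z)); U (a8 x y z); U (esym (a7 x y z)); U (esym (a8 y x z)); fin Hr Hl Hs Hp.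
  + U (a11 x y z); U (a10 x y z); U (a9 x y z); fin Hr Hl Hs Hp.
  + U (a13 x y z); U (a14 x y z); U (a12 y x z); U (a12 x y z); fin Hr Hl Hs Hp.
  + U (a16 x y z); U (a15 x y z); U (a15 y x z); fin Hr Hl Hs Hp.
- split; [split; move=> *; lin Hr Hl Hs Hp|].
  split; [split; move=> *; lin Hr Hl Hs Hp|].
  split; [split; move=> *; lin Hr Hl Hs Hp|].
  split; [split; move=> *; lin Hr Hl Hs Hp|].
  move=> x y v.
  repeat match goal with |- _ /\ _ => split end; apply: ac_lem.
  + U (esym (a1 v y x)); fin Hr Hl Hs Hp.
  + U (a1 v y x); U (a2 v y x); U (a3 v y x); fin Hr Hl Hs Hp.
  + U (esym (a3 v y x)); fin Hr Hl Hs Hp.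
  + U (esym (a4 x y v)); fin Hr Hl Hs Hp.
  + U (a4 x y v); U (a5 x y v); U (esym (a4 y x v)); fin Hr Hl Hs Hp.
  + U (a6 x y v); fin Hr Hl Hs Hp.
  + U (a8 v x y); fin Hr Hl Hs Hp.
  + U (a7 y v x); fin Hr Hl Hs Hp.
  + U (a9 v x y); fin Hr Hl Hs Hp.
  + U (a10 x v y); fin Hr Hl Hs Hp.
  + U (a11 x y v); fin Hr Hl Hs Hp.
  + U (a12 v y x); fin Hr Hl Hs Hp.
  + U (a13 x y v); fin Hr Hl Hs Hp.
  + U (a14 y v x); fin Hr Hl Hs Hp.
  + U (a15 y v x); fin Hr Hl Hs Hp.
  + U (a16 x y v); fin Hr Hl Hs Hp.
- move=> hl hp.
  Ltac finb Hr Hl Hs Hp hl hp := rewrite ?hl ?hp; fin Hr Hl Hs Hp.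
  split.
  + split; [done|split; [done|]].
    move=> x y z; split; [|split; [|split]]; apply: ac_lem.
    * U (esym (a6 x y z)); finb Hr Hl Hs Hp hl hp.
    * U (a4 x y z); finb Hr Hl Hs Hp hl hp.
    * U (esym (a11 x y z)); finb Hr Hl Hs Hp hl hp.
    * U (a13 x y z); finb Hr Hl Hs Hp hl hp.
  + split; [split; move=> a x y z /=; by rewrite Hr.1 Hr.2 scalerDr addrACA|].
    split; [split; move=> a x y z /=; by rewrite Hs.1 Hs.2 scalerBr opprD addrACA|].
    move=> x y z; split; [|split; [|split; [|split]]].
    * by rewrite addrC.
    * apply: ac_lem.
      U (esym (a4 x y z)); U (a4 z x y); U (esym (a4 x z y)); U (a4 z y x); finb Hr Hl Hs Hp hl hp.
    * by rewrite subrr.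
    * apply: ac_lem.
      U (esym (a6 y z x)); U (esym (a6 z x y)); U (esym (a6 x y z)); finb Hr Hl Hs Hp hl hp.
    * apply: ac_lem.
      U (a11 x y z); U (a11 x z y); U (esym (a13 y z x)); finb Hr Hl Hs Hp hl hp.
Qed.
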